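(* Let $u$ be a 5-complex number with $0<\theta_+<\pi/2$ and $0<\psi_1<\pi/2$. Then $$u=\rho\exp\left\{\frac15(h_1+h_2+h_3+h_4)\ln\frac{\sqrt2}{\tan\theta_+}+\left[\frac{\sqrt5+1}{10}(h_1+h_4)-\frac{\sqrt5-1}{10}(h_2+h_3)\right]\ln\tan\psi_1+\tilde e_1\phi_1+\tilde e_2\phi_2\right\},$$ where the exponential of a 5-complex number $w$ is $\exp w=\sum_{n\ge0}w^n/n!$.
   Context: A 5-complex number is $u=x_0+h_1x_1+h_2x_2+h_3x_3+h_4x_4$ with real $x_j$, with componentwise addition and the commutative associative bilinear multiplication determined by $h_jh_k=h_{(j+k)\bmod 5}$, $h_0=1$. Canonical variables: $v_+=\sum_{j=0}^4x_j$ and, for $k=1,2$, $v_k=\sum_j x_j\cos(2\pi kj/5)$, $\tilde v_k=\sum_jx_j\sin(2\pi kj/5)$. For $k=1,2$: $\rho_k^2=v_k^2+\tilde v_k^2$ ($\rho_k\ge0$), $\phi_k\in[0,2\pi)$ with $\cos\phi_k=v_k/\rho_k$, $\sin\phi_k=\tilde v_k/\rho_k$. Planar angle $\psi_1\in[0,\pi/2]$: $\tan\psi_1=\rho_1/\rho_2$. Polar angle $\theta_+\in[0,\pi]$: $\tan\theta_+=\sqrt2\rho_1/v_+$. Amplitude $\rho=(v_+\rho_1^2\rho_2^2)^{1/5}$. Canonical basis elements (with $h_0=1$): $\tilde e_k=\frac25\sum_{j=0}^4\sin(2\pi kj/5)\,h_j$ for $k=1,2$. *)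

(* Defs.v *)
From HB Require Import structures.
From mathcomp Require Import all_boot all_order all_algebra.
From mathcomp Require Import all_classical all_reals all_analysis.
Set Implicit Arguments. Unset Strict Implicit. Unset Printing Implicit Defensive.
Import Order.TTheory GRing.Theory Num.Theory numFieldNormedType.Exports.
Local Open Scope ring_scope.

Section FiveComplex.
Variable R : realType.

(* A 5-complex number u = x_0 + h_1 x_1 + ... + h_4 x_4 is the row vector
   of its real components (x_0,...,x_4). *)
Definition C5 := 'rV[R]_5.

Definition h5 (j : nat) : C5 := \row_(k < 5) (if (k : nat) == (j %% 5)%N then 1 else 0).

Definition mul5 (u v : C5) : C5 :=
  \sum_(i < 5) \sum_(j < 5) (u 0 i * v 0 j) *: h5 (i + j)%N.

Fixpoint pow5 (w : C5) (n : nat) : C5 :=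
  match n with O => h5 0 | S m => mul5 w (pow5 w m) end.

Definition exp5_partial (w : C5) (N : nat) : C5 :=
  \sum_(n < N) (n`!%:R)^-1 *: pow5 w n.

Definition exp5 (w : C5) : C5 :=
  \row_(k < 5) limn (fun N : nat => (exp5_partial w N 0 k : R^o)).

Definition vplus (u : C5) : R := \sum_(j < 5) u 0 j.
Definition vk (k : nat) (u : C5) : R :=
  \sum_(j < 5) u 0 j * cos (2 * pi * (k * j)%N%:R / 5).
Definition vtk (k : nat) (u : C5) : R :=
  \sum_(j < 5) u 0 j * sin (2 * pi * (k * j)%N%:R / 5).
Definition rhok (k : nat) (u : C5) : R := Num.sqrt (vk k u ^+ 2 + vtk k u ^+ 2).
Definition rho5 (u : C5) : R :=
  powR (vplus u * rhok 1 u ^+ 2 * rhok 2 u ^+ 2) (5%:R^-1).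

Definition etilde (k : nat) : C5 :=
  \sum_(j < 5) (2 / 5 * sin (2 * pi * (k * j)%N%:R / 5)) *: h5 j.

End FiveComplex.

(* Main.v *)
Require Import Defs.
From HB Require Import structures.
From mathcomp Require Import all_boot all_order all_algebra.
From mathcomp Require Import all_classical all_reals all_analysis.
From mathcomp Require Import complex ring lra zify.
Import Order.TTheory GRing.Theory Num.Theory numFieldNormedType.Exports.
Local Open Scope ring_scope.

Module Helpers.
Set Implicit Arguments. Unset Strict Implicit. Unset Printing Implicit Defensive.
Local Open Scope classical_set_scope.
Local Open Scope ring_scope.
Local Open Scope complex_scope.

Section Cauchy.
Variable R : realType.

Definition Cp (f g : nat -> R) N :=
  \sum_(0 <= n < N) \sum_(0 <= i < n.+1) f i * g (n - i)%N.
Definition Dp (f g : nat -> R) N :=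
  \sum_(0 <= i < N) \sum_(N - i <= j < N) f i * g j.

Lemma tri_sum (h : nat -> nat -> R) N :
  \sum_(0 <= n < N) \sum_(0 <= i < n.+1) h i (n - i)%N =
  \sum_(0 <= i < N) \sum_(0 <= j < N - i) h i j.
Proof.
elim: N => [|N IH]; first by rewrite !big_geq.
rewrite big_nat_recr // IH /=.
have E : \sum_(0 <= i < N.+1) \sum_(0 <= j < N.+1 - i) h i j =
   \sum_(0 <= i < N.+1) (\sum_(0 <= j < N - i) h i j + h i (N - i)%N).
  by apply: eq_big_nat => i /andP[_ Hi]; rewrite subSn // big_nat_recr.
rewrite E big_split /=; congr (_ + _); by rewrite [RHS]big_nat_recr //= subnn [X in _ = _ + X]big_geq // addr0.
Qed.

Lemma P_split f g N : series f N * series g N = Cp f g N + Dp f g N.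
Proof.
rewrite /series /= /Cp /Dp.
rewrite (tri_sum (fun i j => f i * g j)) -big_split /= big_distrl /=.
apply: eq_big_nat => i /andP[_ Hi].
rewrite big_distrr /= -big_cat_nat //; exact: leq_subr.
Qed.

Lemma Dp_le f g F G N : (forall i, `|f i| <= F i) -> (forall i, `|g i| <= G i) ->
  `|Dp f g N| <= Dp F G N.
Proof.
move=> Hf Hg; rewrite /Dp.
apply: le_trans (ler_norm_sum _ _ _) _; apply: ler_sum => i _.
apply: le_trans (ler_norm_sum _ _ _) _; apply: ler_sum => j _.
rewrite normrM; apply: ler_pM => //.
Qed.

Lemma cauchy_prod_cvg (f g F G : nat -> R) (lf lg lF lG : R) :
  (forall i, `|f i| <= F i) -> (forall i, `|g i| <= G i) ->
  series f @ \oo --> lf -> series g @ \oo --> lg ->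
  series F @ \oo --> lF -> series G @ \oo --> lG ->
  Cp F G @ \oo --> lF * lG ->
  Cp f g @ \oo --> lf * lg.
Proof.
move=> Hf Hg cf cg cF cG cFG.
have eC : forall f g, Cp f g = (fun N => series f N * series g N - Dp f g N).
  by move=> f1 g1; apply/funext => N; rewrite P_split addrK.
have DFG : Dp F G @ \oo --> 0.
  have -> : Dp F G = (fun N => series F N * series G N - Cp F G N).
    by apply/funext => N; rewrite P_split addrC addKr.
  rewrite -(subrr (lF * lG)); apply: cvgB => //; exact: cvgM.
have Dfg : Dp f g @ \oo --> 0.
  apply: (@squeeze_cvgr _ _ _ _ (- Dp F G) (Dp F G)).
  - near=> N; rewrite /= -ler_norml; exact: Dp_le.
  - rewrite -oppr0; exact: cvgN.
  - exact: DFG.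
rewrite eC -(subr0 (lf * lg)); apply: cvgB => //; exact: cvgM.
Unshelve. all: by end_near.
Qed.

End Cauchy.

Section CExp.
Variable R : realType.
Notation Re := (@complex.Re R).
Notation Im := (@complex.Im R).

Lemma binom_fact (A : comNzRingType) (phi : {rmorphism R -> A}) (x y : A) n :
  phi ((n`!%:R)^-1) * (y + x) ^+ n =
  \sum_(i < n.+1) (phi ((i`!%:R)^-1) * x ^+ i) * (phi (((n - i)`!%:R)^-1) * y ^+ (n - i)).
Proof.
rewrite exprDn big_distrr /=; apply: eq_bigr => -[i Hi] _ /=.
have Hin : (i <= n)%N by [].
have key : ((n`!%:R)^-1 * 'C(n, i)%:R : R) = (i`!%:R)^-1 * ((n - i)`!%:R)^-1.
  rewrite -(bin_fact Hin) !natrM.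
  have h1 : ('C(n, i)%:R : R) != 0 by rewrite pnatr_eq0 -lt0n bin_gt0.
  have h2 : (i`!%:R : R) != 0 by rewrite pnatr_eq0 -lt0n fact_gt0.
  have h3 : ((n - i)`!%:R : R) != 0 by rewrite pnatr_eq0 -lt0n fact_gt0.
  by field; rewrite h1 h2 h3.
transitivity (phi ((n`!%:R)^-1 * 'C(n, i)%:R) * (x ^+ i * y ^+ (n - i))).
  by rewrite rmorphM rmorph_nat -mulr_natr; ring.
by rewrite key rmorphM; ring.
Qed.

Lemma ReMul (w v : R[i]) : Re (w * v) = Re w * Re v - Im w * Im v.
Proof. by case: w => a b; case: v => c d. Qed.
Lemma ImMul (w v : R[i]) : Im (w * v) = Re w * Im v + Im w * Re v.
Proof. by case: w => a b; case: v => c d. Qed.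
Lemma ReC (r : R) : Re (r%:C) = r. Proof. by []. Qed.
Lemma ImC (r : R) : Im (r%:C) = 0. Proof. by []. Qed.

Lemma iX2 m : ('i : R[i]) ^+ (m.*2) = ((-1) ^+ m)%:C.
Proof.
rewrite -mul2n exprM (_ : 'i ^+ 2 = (-1)%:C); last first.
  by apply/eqP; rewrite eq_complex /=; apply/andP; split; apply/eqP; ring.
by rewrite -rmorphXn.
Qed.

Lemma coef_iy (b : R) i : ((i`!%:R)^-1)%:C * (0 +i* b) ^+ i = cos_coeff b i +i* sin_coeff b i.
Proof.
have -> : (0 +i* b) = 'i * b%:C.
  by apply/eqP; rewrite eq_complex /=; apply/andP; split; apply/eqP; ring.
rewrite exprMn -rmorphXn.
rewrite /cos_coeff /sin_coeff /=.
rewrite -(odd_double_half i); case: (odd i); move: (i./2) => m /=;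
  rewrite ?add0n ?add1n ?odd_double /= ?doubleK -?exprnP.
- rewrite exprS iX2.
  by apply/eqP; rewrite eq_complex /=; apply/andP; split; apply/eqP; ring.
- rewrite iX2.
  by apply/eqP; rewrite eq_complex /=; apply/andP; split; apply/eqP; ring.
Qed.


Lemma ReMC (w : R[i]) (r : R) : Re (w * r%:C) = Re w * r.
Proof. by case: w => a b /=; ring. Qed.
Lemma ImMC (w : R[i]) (r : R) : Im (w * r%:C) = Im w * r.
Proof. by case: w => a b /=; ring. Qed.

Lemma cvg_cos (x : R) : series (cos_coeff x) @ \oo --> cos x.
Proof. rewrite unlock; exact: is_cvg_series_cos_coeff. Qed.
Lemma cvg_sin (x : R) : series (sin_coeff x) @ \oo --> sin x.
Proof. rewrite unlock; exact: is_cvg_series_sin_coeff. Qed.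
Lemma cvg_exp (x : R) : series (exp_coeff x) @ \oo --> expR x.
Proof. exact: is_cvg_series_exp_coeff. Qed.

Lemma exp_coeff_le (x : R) i : `|exp_coeff x i| <= exp_coeff `|x| i.
Proof. by rewrite /exp_coeff /= normrM normfV normrX normr_nat. Qed.
Lemma cos_coeff_le (x : R) i : `|cos_coeff x i| <= exp_coeff `|x| i.
Proof.
rewrite /exp_coeff /cos_coeff /= !normrM normfV !normr_nat !normrX normrN normr1 expr1n mulr1.
by case: odd; [rewrite !mul0r | rewrite mul1r].
Qed.
Lemma sin_coeff_le (x : R) i : `|sin_coeff x i| <= exp_coeff `|x| i.
Proof.
rewrite /exp_coeff /sin_coeff /= !normrM normfV !normr_nat !normrX normrN normr1 expr1n mulr1.
by case: odd; [rewrite mul1r | rewrite !mul0r].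
Qed.

Lemma Cp_exp (x y : R) : Cp (exp_coeff x) (exp_coeff y) = series (exp_coeff (y + x)).
Proof.
apply/funext => N; rewrite /Cp /series /=; apply: eq_big_nat => n _.
rewrite /exp_coeff /= mulrC (binom_fact idfun x y) /= big_mkord.
by apply: eq_bigr => i _; rewrite ![_ ^+ _ * _]mulrC.
Qed.

Lemma cauchy_exp (f : nat -> R) (b a lf : R) :
  (forall i, `|f i| <= exp_coeff `|b| i) ->
  series f @ \oo --> lf ->
  Cp f (exp_coeff a) @ \oo --> lf * expR a.
Proof.
move=> Hf cf.
have := cauchy_prod_cvg Hf (@exp_coeff_le a) cf (cvg_exp (x:=a)) (cvg_exp (x:=`|b|)) (cvg_exp (x:=`|a|)).
apply.
by rewrite Cp_exp -expRD addrC; exact: cvg_exp.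
Qed.

Lemma cexp_term (a b : R) n :
  ((n`!%:R)^-1)%:C * (a +i* b) ^+ n =
  \sum_(i < n.+1) (cos_coeff b i +i* sin_coeff b i) * (exp_coeff a (n - i)%N)%:C.
Proof.
have -> : a +i* b = a%:C + (0 +i* b).
  by apply/eqP; rewrite eq_complex /=; apply/andP; split; apply/eqP; ring.
rewrite (binom_fact (real_complex R) (0 +i* b) a%:C n).
apply: eq_bigr => i _; rewrite coef_iy; congr (_ * _).
by rewrite /exp_coeff /= -rmorphXn -rmorphM mulrC.
Qed.

Lemma cexp_cvg (z : R[i]) :
  (fun N => Re (\sum_(n < N) ((n`!%:R)^-1)%:C * z ^+ n)) @ \oo --> expR (Re z) * cos (Im z)
  /\ (fun N => Im (\sum_(n < N) ((n`!%:R)^-1)%:C * z ^+ n)) @ \oo --> expR (Re z) * sin (Im z).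
Proof.
case: z => a b /=; split.
- have -> : (fun N => Re (\sum_(n < N) ((n`!%:R)^-1)%:C * (a +i* b) ^+ n))
      = Cp (cos_coeff b) (exp_coeff a).
    apply/funext => N; rewrite /Cp big_mkord raddf_sum; apply: eq_bigr => n _.
    rewrite cexp_term raddf_sum big_mkord; apply: eq_bigr => i _.
    exact: ReMC.
  rewrite mulrC; apply: cauchy_exp (cvg_cos (x:=b)); exact: cos_coeff_le.
- have -> : (fun N => Im (\sum_(n < N) ((n`!%:R)^-1)%:C * (a +i* b) ^+ n))
      = Cp (sin_coeff b) (exp_coeff a).
    apply/funext => N; rewrite /Cp big_mkord raddf_sum; apply: eq_bigr => n _.
    rewrite cexp_term raddf_sum big_mkord; apply: eq_bigr => i _.
    exact: ImMC.
  rewrite mulrC; apply: cauchy_exp (cvg_sin (x:=b)); exact: sin_coeff_le.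
Qed.

End CExp.

Section Five.
Variable R : realType.
Notation Re := (@complex.Re R).
Notation Im := (@complex.Im R).

Definition ang (n : nat) : R := 2 * pi * n%:R / 5.
Definition zeta : R[i] := cos (ang 1) +i* sin (ang 1).

Lemma ang0 : ang 0 = 0. Proof. by rewrite /ang mulr0 mul0r. Qed.
Lemma angS n : ang n.+1 = ang n + ang 1.
Proof. by rewrite /ang -addn1 natrD; ring. Qed.

Lemma zetaX n : zeta ^+ n = cos (ang n) +i* sin (ang n).
Proof.
elim: n => [|n IH].
  by rewrite expr0 ang0 cos0 sin0.
rewrite exprSr IH angS cosD sinD /zeta.
by apply/eqP; rewrite eq_complex /=; apply/andP; split; apply/eqP; ring.
Qed.

Lemma ang5 : ang 5 = pi *+ 2.
Proof. by rewrite /ang -mulr_natr; field. Qed.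

Lemma zeta5 : zeta ^+ 5 = 1.
Proof. by rewrite zetaX ang5 cos2pi sin2pi. Qed.

Lemma zetaXmod n : zeta ^+ n = zeta ^+ (n %% 5).
Proof. by rewrite {1}(divn_eq n 5) exprD mulnC exprM zeta5 expr1n mul1r. Qed.

Lemma cos_mod n : cos (ang n) = cos (ang (n %% 5)).
Proof. by have := congr1 Re (zetaXmod n); rewrite !zetaX. Qed.
Lemma sin_mod n : sin (ang n) = sin (ang (n %% 5)).
Proof. by have := congr1 Im (zetaXmod n); rewrite !zetaX. Qed.

Definition c1 := cos (ang 1).
Definition s1 := sin (ang 1).
Definition c2 := cos (ang 2).
Definition s2 := sin (ang 2).

Lemma cos2piB (x : R) : cos (pi *+ 2 - x) = cos x.
Proof. by rewrite cosB cos2pi sin2pi mul1r mul0r addr0. Qed.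
Lemma sin2piB (x : R) : sin (pi *+ 2 - x) = - sin x.
Proof. by rewrite sinB cos2pi sin2pi mul1r mul0r sub0r. Qed.

Lemma ang3 : ang 3 = pi *+ 2 - ang 2.
Proof. by rewrite /ang -mulr_natr; field. Qed.
Lemma ang4 : ang 4 = pi *+ 2 - ang 1.
Proof. by rewrite /ang -mulr_natr; field. Qed.

Definition tc (n : nat) : R :=
  match (n %% 5)%N with 0 => 1 | 1 => c1 | 2 => c2 | 3 => c2 | _ => c1 end.
Definition ts (n : nat) : R :=
  match (n %% 5)%N with 0 => 0 | 1 => s1 | 2 => s2 | 3 => - s2 | _ => - s1 end.

Lemma cos_tc n : cos (ang n) = tc n.
Proof.
rewrite cos_mod /tc; have : (n %% 5 < 5)%N by rewrite ltn_pmod.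
case: (n %% 5)%N => [|[|[|[|[|r]]]]] //= _.
- by rewrite ang0 cos0.
- by rewrite ang3 cos2piB.
- by rewrite ang4 cos2piB.
Qed.
Lemma sin_tc n : sin (ang n) = ts n.
Proof.
rewrite sin_mod /ts; have : (n %% 5 < 5)%N by rewrite ltn_pmod.
case: (n %% 5)%N => [|[|[|[|[|r]]]]] //= _.
- by rewrite ang0 sin0.
- by rewrite ang3 sin2piB.
- by rewrite ang4 sin2piB.
Qed.

Lemma ReZ n : Re (zeta ^+ n) = tc n. Proof. by rewrite zetaX /= cos_tc. Qed.
Lemma ImZ n : Im (zeta ^+ n) = ts n. Proof. by rewrite zetaX /= sin_tc. Qed.

Lemma pi_pos : 0 < pi :> R. Proof. exact: pi_gt0. Qed.
Lemma s1_gt0 : 0 < s1.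
Proof. have := pi_pos => hp; apply: sin_gt0_pi; rewrite /ang; apply/andP; split; lra. Qed.
Lemma s2_gt0 : 0 < s2.
Proof. have := pi_pos => hp; apply: sin_gt0_pi; rewrite /ang; apply/andP; split; lra. Qed.
Lemma c1_gt0 : 0 < c1.
Proof. have := pi_pos => hp; apply: cos_gt0_pihalf; rewrite /ang; apply/andP; split; lra. Qed.

Lemma ang2 : ang 2 = ang 1 *+ 2.
Proof. by rewrite /ang -mulr_natr; field. Qed.
Lemma c2E : c2 = c1 ^+ 2 *+ 2 - 1.
Proof. by rewrite /c2 ang2 cos_mulr2n. Qed.
Lemma s2E : s2 = (c1 * s1) *+ 2.
Proof. by rewrite /s2 ang2 sin_mulr2n. Qed.
Lemma s1sq : s1 ^+ 2 = 1 - c1 ^+ 2. Proof. exact: sin2cos2. Qed.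
Lemma s2sq : s2 ^+ 2 = 1 - c2 ^+ 2. Proof. exact: sin2cos2. Qed.

Lemma c1q : 4 * c1 ^+ 2 + 2 * c1 - 1 = 0.
Proof.
have h3 : cos (ang 3) = c1 * c2 - s1 * s2.
  by rewrite (_ : ang 3 = ang 1 + ang 2) ?cosD // /ang; ring.
rewrite cos_tc /tc /= in h3.
have h3' : c2 = c1 * c2 - 2 * c1 * s1 ^+ 2 by rewrite {1}h3 s2E; ring.
rewrite s1sq c2E in h3'.
have hs := s1_gt0; have hc := c1_gt0; have hsq := s1sq.
have hlt : c1 < 1 by nra.
have : (1 - c1) * (4 * c1 ^+ 2 + 2 * c1 - 1) = 0 by nra.
move/eqP; rewrite mulf_eq0 => /orP[|/eqP //]; rewrite subr_eq0 => /eqP h.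
by move: hlt; rewrite -h ltxx.
Qed.

Lemma sqrt5E : Num.sqrt 5 = 4 * c1 + 1.
Proof.
have hc := c1_gt0; have hq := c1q.
rewrite -(@ger0_norm _ (4 * c1 + 1)); last by lra.
by rewrite -sqrtr_sqr; congr Num.sqrt; nra.
Qed.

Lemma c2_lin : c2 = - 1 / 2 - c1.
Proof. have hq := c1q; rewrite c2E; nra. Qed.

End Five.

Section Chi.
Variable R : realType.
Notation Re := (@complex.Re R).
Notation Im := (@complex.Im R).
Notation zeta := (@zeta R).

Definition chi (k : nat) (v : C5 R) : R[i] :=
  \sum_(j < 5) (v 0 j)%:C * zeta ^+ (k * j).

Lemma Re_Cmul (r : R) (z : R[i]) : Re (r%:C * z) = r * Re z.
Proof. by case: z => a b /=; ring. Qed.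
Lemma Im_Cmul (r : R) (z : R[i]) : Im (r%:C * z) = r * Im z.
Proof. by case: z => a b /=; ring. Qed.

Lemma Re_sum (I : Type) (r : seq I) (P : pred I) (F : I -> R[i]) :
  Re (\sum_(i <- r | P i) F i) = \sum_(i <- r | P i) Re (F i).
Proof. exact: raddf_sum. Qed.
Lemma Im_sum (I : Type) (r : seq I) (P : pred I) (F : I -> R[i]) :
  Im (\sum_(i <- r | P i) F i) = \sum_(i <- r | P i) Im (F i).
Proof. exact: raddf_sum. Qed.
Lemma ReD (x y : R[i]) : Re (x + y) = Re x + Re y. Proof. by case: x; case: y. Qed.
Lemma ImD (x y : R[i]) : Im (x + y) = Im x + Im y. Proof. by case: x; case: y. Qed.
Lemma ReN (x : R[i]) : Re (- x) = - Re x. Proof. by case: x. Qed.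
Lemma ImN (x : R[i]) : Im (- x) = - Im x. Proof. by case: x. Qed.

Lemma chi_Re k v : Re (chi k v) = vk k v.
Proof.
rewrite /chi Re_sum /vk; apply: eq_bigr => j _.
by rewrite Re_Cmul zetaX.
Qed.
Lemma chi_Im k v : Im (chi k v) = vtk k v.
Proof.
rewrite /chi Im_sum /vtk; apply: eq_bigr => j _.
by rewrite Im_Cmul zetaX.
Qed.

Lemma chi0 k : chi k 0 = 0.
Proof. by rewrite /chi big1 // => j _; rewrite mxE mul0r. Qed.
Lemma chiD k u v : chi k (u + v) = chi k u + chi k v.
Proof.
rewrite /chi -big_split /=; apply: eq_bigr => j _.
by rewrite mxE rmorphD mulrDl.
Qed.
Lemma chiZ k (c : R) v : chi k (c *: v) = c%:C * chi k v.
Proof.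
rewrite /chi big_distrr /=; apply: eq_bigr => j _.
by rewrite mxE rmorphM mulrA.
Qed.
Lemma chiN k v : chi k (- v) = - chi k v.
Proof. by rewrite -scaleN1r chiZ rmorphN rmorph1 mulN1r. Qed.
Lemma chiB k u v : chi k (u - v) = chi k u - chi k v.
Proof. by rewrite chiD chiN. Qed.
Lemma chi_sum k (I : Type) (r : seq I) (P : pred I) (F : I -> 'rV[R]_5) :
  chi k (\sum_(i <- r | P i) F i) = \sum_(i <- r | P i) chi k (F i).
Proof.
apply: (big_ind2 (fun x y => chi k x = y)); first exact: chi0.
  by move=> a b c d <- <-; rewrite chiD.
by [].
Qed.

Lemma chi_h5 k m : chi k (h5 R m) = zeta ^+ (k * m).
Proof.
rewrite /chi (bigD1 (Ordinal (ltn_pmod m (isT : (0 < 5)%N)))) //= big1.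
  by rewrite mxE eqxx mul1r addr0 [in RHS]zetaXmod [in LHS]zetaXmod modnMmr.
move=> j /negbTE hj; rewrite mxE.
have -> : (nat_of_ord j == (m %% 5)%N) = false.
  by apply/negbTE; apply: contraFN hj => /eqP hj'; apply/eqP/val_inj.
by rewrite mul0r.
Qed.

Lemma chi_one k : chi k (h5 R 0) = 1.
Proof. by rewrite chi_h5 muln0 expr0. Qed.

Lemma chi_mul k u v : chi k (mul5 u v) = chi k u * chi k v.
Proof.
rewrite /mul5; etransitivity; first exact: chi_sum.
apply: eq_trans (_ : _ = \sum_(i < 5) (u 0 i)%:C * zeta ^+ (k * i) * chi k v) _; last first.
  by rewrite -big_distrl.
apply: eq_bigr => i _ /=; etransitivity; first exact: chi_sum.
rewrite /= [in RHS]/chi big_distrr /=; apply: eq_bigr => j _.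
rewrite chiZ chi_h5 rmorphM mulnDr exprD; ring.
Qed.

Lemma chi_pow k w n : chi k (pow5 w n) = chi k w ^+ n.
Proof. by elim: n => [|n IH] /=; rewrite ?chi_one ?expr0 // chi_mul IH exprS. Qed.

Lemma chi_partial k w N :
  chi k (exp5_partial w N) = \sum_(n < N) ((n`!%:R)^-1)%:C * chi k w ^+ n.
Proof.
rewrite /exp5_partial chi_sum; apply: eq_bigr => n _.
by rewrite chiZ chi_pow.
Qed.

End Chi.

Section Inv.
Variable R : realType.
Notation Re := (@complex.Re R).
Notation Im := (@complex.Im R).
Notation zeta := (@zeta R).

Lemma geo_nz (z : R[i]) : z ^+ 5 = 1 -> Im z != 0 -> \sum_(k < 5) z ^+ k = 0.
Proof.
move=> z5 hz.
have h : (z - 1) * \sum_(k < 5) z ^+ k = 0.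
  rewrite !big_ord_recr big_ord0 /=.
  by apply: eq_trans (_ : z ^+ 5 - 1 = 0); [ring | rewrite z5 subrr].
move/eqP: h; rewrite mulf_eq0 => /orP[/eqP h|/eqP //].
have e : Im z = Im (z - 1 + 1) by rewrite subrK.
by move: hz; rewrite e h add0r /= eqxx.
Qed.

Lemma geo5 d : \sum_(k < 5) (zeta ^+ d) ^+ k = if (d %% 5 == 0)%N then 5%:R else 0.
Proof.
have z5 : (zeta ^+ d) ^+ 5 = 1 by rewrite -exprM mulnC exprM zeta5 expr1n.
move: z5; rewrite zetaXmod.
have : (d %% 5 < 5)%N by rewrite ltn_pmod.
have hs1 := @s1_gt0 R; have hs2 := @s2_gt0 R.
case: (d %% 5)%N => [|[|[|[|[|r]]]]] //= _ z5.
- by rewrite expr0 !big_ord_recr big_ord0 /= !expr1n; ring.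
- by apply: geo_nz => //; rewrite ImZ /ts /=; lra.
- by apply: geo_nz => //; rewrite ImZ /ts /=; lra.
- by apply: geo_nz => //; rewrite ImZ /ts /=; lra.
- by apply: geo_nz => //; rewrite ImZ /ts /=; lra.
Qed.

Lemma mod_eq (j m : 'I_5) : (((j + 4 * m) %% 5 == 0)%N) = (j == m).
Proof.
case: j => [[|[|[|[|[|j]]]]] hj] //; case: m => [[|[|[|[|[|m]]]]] hm] //.
Qed.

Lemma inv5 (v : C5 R) (m : 'I_5) :
  ((5%:R * v 0 m))%:C = \sum_(k < 5) chi k v * zeta ^+ (k * (4 * m)).
Proof.
rewrite /chi.
under eq_bigr do rewrite big_distrl.
rewrite exchange_big /=.
under eq_bigr => j _.
  rewrite (_ : \sum_(i < 5) _ = (v 0 j)%:C * \sum_(i < 5) (zeta ^+ (j + 4 * m)) ^+ i); last first.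
    rewrite big_distrr /=; apply: eq_bigr => i _.
    by rewrite -mulrA -exprD -mulnDr -exprM mulnC.
  rewrite geo5 mod_eq.
  over.
rewrite (bigD1 m) //= eqxx big1 ?addr0.
  by rewrite rmorphM rmorph_nat mulrC.
by move=> j /negbTE ->; rewrite mulr0.
Qed.

Lemma conj_unit (a b : R[i]) : a * b = 1 -> Re a ^+ 2 + Im a ^+ 2 = 1 ->
  Re b = Re a /\ Im b = - Im a.
Proof.
move=> hab hn.
have hb : b = Re a -i* Im a.
  have h1 : a * (Re a -i* Im a) = 1.
    move: hn; case: a {hab} => x y /= hn.
    by apply/eqP; rewrite eq_complex /=; apply/andP; split; apply/eqP; [rewrite -hn|]; ring.
  by rewrite -[b]mul1r -h1 mulrC mulrA [b * a]mulrC hab mul1r.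
by rewrite hb.
Qed.

Lemma chi_conj k v : (k <= 5)%N ->
  Re (chi (5 - k) v) = Re (chi k v) /\ Im (chi (5 - k) v) = - Im (chi k v).
Proof.
move=> hk.
have H : forall j : 'I_5, Re (zeta ^+ ((5 - k) * j)) = Re (zeta ^+ (k * j)) /\
                          Im (zeta ^+ ((5 - k) * j)) = - Im (zeta ^+ (k * j)).
  move=> j; apply: conj_unit.
    by rewrite -exprD -mulnDl subnKC // exprM zeta5 expr1n.
  by rewrite zetaX /= cos2Dsin2.
rewrite /chi !Re_sum !Im_sum; split; last rewrite -sumrN; apply: eq_bigr => j _.
  by rewrite !Re_Cmul (proj1 (H j)).
by rewrite !Im_Cmul (proj2 (H j)) mulrN.
Qed.

End Inv.

Section W.
Variable R : realType.
Notation Re := (@complex.Re R).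
Notation Im := (@complex.Im R).
Notation zeta := (@zeta R).

Lemma etildeE l : etilde R l = \sum_(j < 5) (2 / 5 * ts R (l * j)) *: h5 R j.
Proof. by apply: eq_bigr => j _; rewrite -sin_tc. Qed.

Lemma chi_etilde k l :
  chi k (etilde R l) = \sum_(j < 5) (2 / 5 * ts R (l * j))%:C * zeta ^+ (k * j).
Proof.
rewrite etildeE; etransitivity; first exact: chi_sum.
by apply: eq_bigr => j _; rewrite chiZ chi_h5.
Qed.

Lemma Re_etilde k l :
  Re (chi k (etilde R l)) = \sum_(j < 5) 2 / 5 * ts R (l * j) * tc R (k * j).
Proof.
rewrite chi_etilde Re_sum; apply: eq_bigr => j _.
by rewrite Re_Cmul ReZ.
Qed.
Lemma Im_etilde k l :
  Im (chi k (etilde R l)) = \sum_(j < 5) 2 / 5 * ts R (l * j) * ts R (k * j).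
Proof.
rewrite chi_etilde Im_sum; apply: eq_bigr => j _.
by rewrite Im_Cmul ImZ.
Qed.

Definition Wv (A L p1 p2 : R) : C5 R :=
  A *: (h5 R 1 + h5 R 2 + h5 R 3 + h5 R 4)
  + L *: (((Num.sqrt 5 + 1) / 10) *: (h5 R 1 + h5 R 4)
          - ((Num.sqrt 5 - 1) / 10) *: (h5 R 2 + h5 R 3))
  + p1 *: etilde R 1 + p2 *: etilde R 2.

Lemma chiW k A L p1 p2 : chi k (Wv A L p1 p2) =
  A%:C * (zeta ^+ (k * 1) + zeta ^+ (k * 2) + zeta ^+ (k * 3) + zeta ^+ (k * 4))
  + L%:C * (((Num.sqrt 5 + 1) / 10)%:C * (zeta ^+ (k * 1) + zeta ^+ (k * 4))
          - ((Num.sqrt 5 - 1) / 10)%:C * (zeta ^+ (k * 2) + zeta ^+ (k * 3)))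
  + p1%:C * chi k (etilde R 1) + p2%:C * chi k (etilde R 2).
Proof. by rewrite /Wv !chiD !chiZ chiB !chiZ !chiD !chi_h5. Qed.

End W.

Section W2.
Variable R : realType.
Notation Re := (@complex.Re R).
Notation Im := (@complex.Im R).

Ltac expand := rewrite ?chiW; do 4 rewrite ?ReD ?ImD ?ReN ?ImN ?Re_Cmul ?Im_Cmul ?Re_etilde ?Im_etilde ?ReZ ?ImZ;
  rewrite !big_ord_recr !big_ord0 /= /tc /ts !mulnE /=.

Lemma ReW0 A L p1 p2 : Re (chi 0 (Wv A L p1 p2)) = 4 * A + 2 / 5 * L.
Proof.
expand.
  have hq := c1q R. have hs1 := s1sq R. have hs2 := s2sq R.
  rewrite (c2_lin R) in hs2 *. rewrite (sqrt5E R).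
  have hLq : L * (4 * c1 R ^+ 2 + 2 * c1 R - 1) = 0 by rewrite hq mulr0.
  have hp1a : p1 * (s1 R ^+ 2 - (1 - c1 R ^+ 2)) = 0 by rewrite hs1 subrr mulr0.
  have hp1b : p1 * (s2 R ^+ 2 - (1 - (- 1 / 2 - c1 R) ^+ 2)) = 0 by rewrite hs2 subrr mulr0.
  have hp1q : p1 * (4 * c1 R ^+ 2 + 2 * c1 R - 1) = 0 by rewrite hq mulr0.
  have hp2a : p2 * (s1 R ^+ 2 - (1 - c1 R ^+ 2)) = 0 by rewrite hs1 subrr mulr0.
  have hp2b : p2 * (s2 R ^+ 2 - (1 - (- 1 / 2 - c1 R) ^+ 2)) = 0 by rewrite hs2 subrr mulr0.
  have hp2q : p2 * (4 * c1 R ^+ 2 + 2 * c1 R - 1) = 0 by rewrite hq mulr0.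
  lra.
Qed.

Lemma ImW0 A L p1 p2 : Im (chi 0 (Wv A L p1 p2)) = 0.
Proof.
expand.
  have hq := c1q R. have hs1 := s1sq R. have hs2 := s2sq R.
  rewrite (c2_lin R) in hs2 *. rewrite (sqrt5E R).
  have hLq : L * (4 * c1 R ^+ 2 + 2 * c1 R - 1) = 0 by rewrite hq mulr0.
  have hp1a : p1 * (s1 R ^+ 2 - (1 - c1 R ^+ 2)) = 0 by rewrite hs1 subrr mulr0.
  have hp1b : p1 * (s2 R ^+ 2 - (1 - (- 1 / 2 - c1 R) ^+ 2)) = 0 by rewrite hs2 subrr mulr0.
  have hp1q : p1 * (4 * c1 R ^+ 2 + 2 * c1 R - 1) = 0 by rewrite hq mulr0.
  have hp2a : p2 * (s1 R ^+ 2 - (1 - c1 R ^+ 2)) = 0 by rewrite hs1 subrr mulr0.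
  have hp2b : p2 * (s2 R ^+ 2 - (1 - (- 1 / 2 - c1 R) ^+ 2)) = 0 by rewrite hs2 subrr mulr0.
  have hp2q : p2 * (4 * c1 R ^+ 2 + 2 * c1 R - 1) = 0 by rewrite hq mulr0.
  lra.
Qed.

Lemma ReW1 A L p1 p2 : Re (chi 1 (Wv A L p1 p2)) = - A + 2 / 5 * L.
Proof.
expand.
  have hq := c1q R. have hs1 := s1sq R. have hs2 := s2sq R.
  rewrite (c2_lin R) in hs2 *. rewrite (sqrt5E R).
  have hLq : L * (4 * c1 R ^+ 2 + 2 * c1 R - 1) = 0 by rewrite hq mulr0.
  have hp1a : p1 * (s1 R ^+ 2 - (1 - c1 R ^+ 2)) = 0 by rewrite hs1 subrr mulr0.
  have hp1b : p1 * (s2 R ^+ 2 - (1 - (- 1 / 2 - c1 R) ^+ 2)) = 0 by rewrite hs2 subrr mulr0.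
  have hp1q : p1 * (4 * c1 R ^+ 2 + 2 * c1 R - 1) = 0 by rewrite hq mulr0.
  have hp2a : p2 * (s1 R ^+ 2 - (1 - c1 R ^+ 2)) = 0 by rewrite hs1 subrr mulr0.
  have hp2b : p2 * (s2 R ^+ 2 - (1 - (- 1 / 2 - c1 R) ^+ 2)) = 0 by rewrite hs2 subrr mulr0.
  have hp2q : p2 * (4 * c1 R ^+ 2 + 2 * c1 R - 1) = 0 by rewrite hq mulr0.
  lra.
Qed.

Lemma ImW1 A L p1 p2 : Im (chi 1 (Wv A L p1 p2)) = p1.
Proof.
expand.
  have hq := c1q R. have hs1 := s1sq R. have hs2 := s2sq R.
  rewrite (c2_lin R) in hs2 *. rewrite (sqrt5E R).
  have hLq : L * (4 * c1 R ^+ 2 + 2 * c1 R - 1) = 0 by rewrite hq mulr0.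
  have hp1a : p1 * (s1 R ^+ 2 - (1 - c1 R ^+ 2)) = 0 by rewrite hs1 subrr mulr0.
  have hp1b : p1 * (s2 R ^+ 2 - (1 - (- 1 / 2 - c1 R) ^+ 2)) = 0 by rewrite hs2 subrr mulr0.
  have hp1q : p1 * (4 * c1 R ^+ 2 + 2 * c1 R - 1) = 0 by rewrite hq mulr0.
  have hp2a : p2 * (s1 R ^+ 2 - (1 - c1 R ^+ 2)) = 0 by rewrite hs1 subrr mulr0.
  have hp2b : p2 * (s2 R ^+ 2 - (1 - (- 1 / 2 - c1 R) ^+ 2)) = 0 by rewrite hs2 subrr mulr0.
  have hp2q : p2 * (4 * c1 R ^+ 2 + 2 * c1 R - 1) = 0 by rewrite hq mulr0.
  lra.
Qed.

Lemma ReW2 A L p1 p2 : Re (chi 2 (Wv A L p1 p2)) = - A - 3 / 5 * L.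
Proof.
expand.
  have hq := c1q R. have hs1 := s1sq R. have hs2 := s2sq R.
  rewrite (c2_lin R) in hs2 *. rewrite (sqrt5E R).
  have hLq : L * (4 * c1 R ^+ 2 + 2 * c1 R - 1) = 0 by rewrite hq mulr0.
  have hp1a : p1 * (s1 R ^+ 2 - (1 - c1 R ^+ 2)) = 0 by rewrite hs1 subrr mulr0.
  have hp1b : p1 * (s2 R ^+ 2 - (1 - (- 1 / 2 - c1 R) ^+ 2)) = 0 by rewrite hs2 subrr mulr0.
  have hp1q : p1 * (4 * c1 R ^+ 2 + 2 * c1 R - 1) = 0 by rewrite hq mulr0.
  have hp2a : p2 * (s1 R ^+ 2 - (1 - c1 R ^+ 2)) = 0 by rewrite hs1 subrr mulr0.
  have hp2b : p2 * (s2 R ^+ 2 - (1 - (- 1 / 2 - c1 R) ^+ 2)) = 0 by rewrite hs2 subrr mulr0.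
  have hp2q : p2 * (4 * c1 R ^+ 2 + 2 * c1 R - 1) = 0 by rewrite hq mulr0.
  lra.
Qed.

Lemma ImW2 A L p1 p2 : Im (chi 2 (Wv A L p1 p2)) = p2.
Proof.
expand.
  have hq := c1q R. have hs1 := s1sq R. have hs2 := s2sq R.
  rewrite (c2_lin R) in hs2 *. rewrite (sqrt5E R).
  have hLq : L * (4 * c1 R ^+ 2 + 2 * c1 R - 1) = 0 by rewrite hq mulr0.
  have hp1a : p1 * (s1 R ^+ 2 - (1 - c1 R ^+ 2)) = 0 by rewrite hs1 subrr mulr0.
  have hp1b : p1 * (s2 R ^+ 2 - (1 - (- 1 / 2 - c1 R) ^+ 2)) = 0 by rewrite hs2 subrr mulr0.
  have hp1q : p1 * (4 * c1 R ^+ 2 + 2 * c1 R - 1) = 0 by rewrite hq mulr0.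
  have hp2a : p2 * (s1 R ^+ 2 - (1 - c1 R ^+ 2)) = 0 by rewrite hs1 subrr mulr0.
  have hp2b : p2 * (s2 R ^+ 2 - (1 - (- 1 / 2 - c1 R) ^+ 2)) = 0 by rewrite hs2 subrr mulr0.
  have hp2q : p2 * (4 * c1 R ^+ 2 + 2 * c1 R - 1) = 0 by rewrite hq mulr0.
  lra.
Qed.

End W2.

Section Final.
Variable R : realType.
Notation Re := (@complex.Re R).
Notation Im := (@complex.Im R).
Notation zeta := (@zeta R).

Lemma cvg_sum_ord n (f : nat -> nat -> R) (l : nat -> R) :
  (forall i, (i < n)%N -> f i @ \oo --> l i) ->
  (fun N => \sum_(i < n) f i N) @ \oo --> \sum_(i < n) l i.
Proof.
elim: n => [|n IH] H.
  rewrite big_ord0; under eq_fun do rewrite big_ord0; exact: cvg_cst.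
rewrite big_ord_recr /=; under eq_fun do rewrite big_ord_recr /=.
apply: cvgD; first by apply: IH => i hi; apply: H; exact: ltnW.
exact: H.
Qed.

Lemma comp_formula (v : C5 R) (m : 'I_5) : v 0 m = 5^-1 *
  \sum_(k < 5) (Re (chi k v) * Re (zeta ^+ (k * (4 * m))) - Im (chi k v) * Im (zeta ^+ (k * (4 * m)))).
Proof.
have h := congr1 Re (inv5 v m); rewrite Re_sum in h.
have h2 : \sum_(k < 5) (Re (chi k v) * Re (zeta ^+ (k * (4 * m))) - Im (chi k v) * Im (zeta ^+ (k * (4 * m))))
   = 5%:R * v 0 m.
  rewrite -[RHS]/(Re ((5%:R * v 0 m)%:C)) h; apply: eq_bigr => k _; symmetry; exact: ReMul.
by rewrite h2 mulrA mulVf ?mul1r.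
Qed.


Lemma cvg_comp5 (p : nat -> C5 R) (a b : nat -> R) (m : 'I_5) :
  (forall k, (k < 5)%N -> (fun N => Re (chi k (p N))) @ \oo --> a k) ->
  (forall k, (k < 5)%N -> (fun N => Im (chi k (p N))) @ \oo --> b k) ->
  (fun N => p N 0 m) @ \oo -->
    5^-1 * \sum_(k < 5) (a k * Re (zeta ^+ (k * (4 * m))) - b k * Im (zeta ^+ (k * (4 * m)))).
Proof.
move=> ha hb.
have -> : (fun N => p N 0 m) = (fun N => 5^-1 * \sum_(k < 5)
   (Re (chi k (p N)) * Re (zeta ^+ (k * (4 * m))) - Im (chi k (p N)) * Im (zeta ^+ (k * (4 * m))))).
  by apply/funext => N; exact: comp_formula.
apply: cvgMr.
have := @cvg_sum_ord 5 (fun k N => Re (chi k (p N)) * Re (zeta ^+ (k * (4 * m)))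
   - Im (chi k (p N)) * Im (zeta ^+ (k * (4 * m))))
   (fun k => a k * Re (zeta ^+ (k * (4 * m))) - b k * Im (zeta ^+ (k * (4 * m)))).
apply => k hk.
by apply: cvgB; apply: cvgMl; [exact: ha | exact: hb].
Qed.


Lemma cexp_chi k (w : C5 R) :
  (fun N => Re (chi k (exp5_partial w N))) @ \oo --> expR (Re (chi k w)) * cos (Im (chi k w))
  /\ (fun N => Im (chi k (exp5_partial w N))) @ \oo --> expR (Re (chi k w)) * sin (Im (chi k w)).
Proof.
have [h1 h2] := cexp_cvg (chi k w).
split.
- have -> : (fun N => Re (chi k (exp5_partial w N))) =
     (fun N => Re (\sum_(n < N) ((n`!%:R)^-1)%:C * chi k w ^+ n)).
    by apply/funext => N; rewrite chi_partial.
  exact: h1.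
- have -> : (fun N => Im (chi k (exp5_partial w N))) =
     (fun N => Im (\sum_(n < N) ((n`!%:R)^-1)%:C * chi k w ^+ n)).
    by apply/funext => N; rewrite chi_partial.
  exact: h2.
Qed.

Lemma helper (rho E C r : R) : rho != 0 -> rho * E = r -> E * C = r * C / rho.
Proof. by move=> h <-; field. Qed.

End Final.

End Helpers.
Import Helpers.
Unset Implicit Arguments. Set Strict Implicit. Set Printing Implicit Defensive.

Theorem mainTheorem6 (R : realType) (u : C5 R)
    (thp psi1 phi1 phi2 : R)
    (Hth : 0 < thp < pi / 2)
    (Hthdef : tan thp = Num.sqrt 2 * rhok 1 u / vplus u)
    (Hpsi : 0 < psi1 < pi / 2)
    (Hpsidef : tan psi1 = rhok 1 u / rhok 2 u)
    (Hphi1 : 0 <= phi1 < 2 * pi)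
    (Hphi1c : cos phi1 = vk 1 u / rhok 1 u)
    (Hphi1s : sin phi1 = vtk 1 u / rhok 1 u)
    (Hphi2 : 0 <= phi2 < 2 * pi)
    (Hphi2c : cos phi2 = vk 2 u / rhok 2 u)
    (Hphi2s : sin phi2 = vtk 2 u / rhok 2 u) :
  u = rho5 u *: exp5
        ((5^-1 * ln (Num.sqrt 2 / tan thp)) *: (h5 R 1 + h5 R 2 + h5 R 3 + h5 R 4)
         + ln (tan psi1) *:
             (((Num.sqrt 5 + 1) / 10) *: (h5 R 1 + h5 R 4)
              - ((Num.sqrt 5 - 1) / 10) *: (h5 R 2 + h5 R 3))
         + phi1 *: etilde R 1 + phi2 *: etilde R 2).
Proof.
Local Open Scope classical_set_scope.
change (u = rho5 u *: exp5 (Wv (5^-1 * ln (Num.sqrt 2 / tan thp)) (ln (tan psi1)) phi1 phi2)).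
set A := 5^-1 * ln (Num.sqrt 2 / tan thp).
set L := ln (tan psi1).
have hsq2 : 0 < Num.sqrt 2 :> R by rewrite sqrtr_gt0.
have hpi : 0 < pi :> R := pi_gt0 R.
case/andP: Hth => ht0 ht1; case/andP: Hpsi => hp0 hp1.
have htan : 0 < tan thp.
  rewrite /tan divr_gt0 //; [apply: sin_gt0_pihalf | apply: cos_gt0_pihalf];
  apply/andP; split; lra.
have htanp : 0 < tan psi1.
  rewrite /tan divr_gt0 //; [apply: sin_gt0_pihalf | apply: cos_gt0_pihalf];
  apply/andP; split; lra.
have r1ge : 0 <= rhok 1 u by apply: sqrtr_ge0.
have r2ge : 0 <= rhok 2 u by apply: sqrtr_ge0.
have hr1 : 0 < rhok 1 u.
  rewrite lt0r r1ge andbT; apply/eqP => h0; move: htan.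
  by rewrite Hthdef h0 mulr0 mul0r ltxx.
have hV : 0 < vplus u.
  rewrite ltNge; apply/negP => hV.
  have : Num.sqrt 2 * rhok 1 u / vplus u <= 0.
    by apply: mulr_ge0_le0; [apply: mulr_ge0; [exact: ltW|] | rewrite invr_le0].
  by rewrite -Hthdef leNgt htan.
have hr2 : 0 < rhok 2 u.
  rewrite lt0r r2ge andbT; apply/eqP => h0; move: htanp.
  by rewrite Hpsidef h0 invr0 mulr0 ltxx.
set V := vplus u. set r1 := rhok 1 u. set r2 := rhok 2 u.
have eA : A = 5^-1 * (ln V - ln r1).
  rewrite /A (_ : Num.sqrt 2 / tan thp = V / r1); first by rewrite ln_div.
  rewrite Hthdef -/V -/r1; field.
  by rewrite !gt_eqF.
have eL : L = ln r1 - ln r2 by rewrite /L Hpsidef ln_div.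
have hprod : 0 < V * r1 ^+ 2 * r2 ^+ 2 by rewrite !mulr_gt0 // exprn_gt0.
have erho : rho5 u = expR (5^-1 * (ln V + ln r1 *+ 2 + ln r2 *+ 2)).
  rewrite /rho5 -/V -/r1 -/r2 /powR (gt_eqF hprod).
  have q1 : r1 ^+ 2 \is Num.pos by rewrite posrE exprn_gt0.
  have q2 : r2 ^+ 2 \is Num.pos by rewrite posrE exprn_gt0.
  have q3 : V * r1 ^+ 2 \is Num.pos by rewrite posrE mulr_gt0 // exprn_gt0.
  by rewrite lnM // lnM // !lnXn.
have hrho : 0 < rho5 u by rewrite erho expR_gt0.
have k0 : rho5 u * expR (4 * A + 2 / 5 * L) = V.
  apply: eq_trans (_ : expR (ln V) = V); last exact: lnK.
  by rewrite erho -expRD eA eL; congr expR; field.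
have k1 : rho5 u * expR (- A + 2 / 5 * L) = r1.
  apply: eq_trans (_ : expR (ln r1) = r1); last exact: lnK.
  by rewrite erho -expRD eA eL; congr expR; field.
have k2 : rho5 u * expR (- A - 3 / 5 * L) = r2.
  apply: eq_trans (_ : expR (ln r2) = r2); last exact: lnK.
  by rewrite erho -expRD eA eL; congr expR; field.
have e3 : forall v : C5 R, complex.Re (chi 3 v) = complex.Re (chi 2 v) /\ complex.Im (chi 3 v) = - complex.Im (chi 2 v).
  by move=> v; exact: (@chi_conj R 2 v isT).
have e4 : forall v : C5 R, complex.Re (chi 4 v) = complex.Re (chi 1 v) /\ complex.Im (chi 4 v) = - complex.Im (chi 1 v).
  by move=> v; exact: (@chi_conj R 1 v isT).
have u0r : complex.Re (chi 0 u) = V.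
  rewrite chi_Re /vk /V /vplus; apply: eq_bigr => j _.
  by rewrite mul0n mulr0 mul0r cos0 mulr1.
have u0i : complex.Im (chi 0 u) = 0.
  rewrite chi_Im /vtk big1 // => j _.
  by rewrite mul0n mulr0 mul0r sin0 mulr0.
have u1r : complex.Re (chi 1 u) = r1 * cos phi1.
  by rewrite chi_Re Hphi1c -/r1 mulrC divfK ?gt_eqF.
have u1i : complex.Im (chi 1 u) = r1 * sin phi1.
  by rewrite chi_Im Hphi1s -/r1 mulrC divfK ?gt_eqF.
have u2r : complex.Re (chi 2 u) = r2 * cos phi2.
  by rewrite chi_Re Hphi2c -/r2 mulrC divfK ?gt_eqF.
have u2i : complex.Im (chi 2 u) = r2 * sin phi2.
  by rewrite chi_Im Hphi2s -/r2 mulrC divfK ?gt_eqF.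
have hrho0 : rho5 u != 0 by rewrite gt_eqF.
set a := fun k => complex.Re (chi k u) / rho5 u.
set b := fun k => complex.Im (chi k u) / rho5 u.
have [c0r c0i] := cexp_chi 0 (Wv A L phi1 phi2).
have [c1r c1i] := cexp_chi 1 (Wv A L phi1 phi2).
have [c2r c2i] := cexp_chi 2 (Wv A L phi1 phi2).
rewrite ReW0 ImW0 in c0r c0i; rewrite ReW1 ImW1 in c1r c1i; rewrite ReW2 ImW2 in c2r c2i.
have HA : forall k, (k < 5)%N ->
    (fun N => complex.Re (chi k (exp5_partial (Wv A L phi1 phi2) N))) @ \oo --> a k.
  case=> [|[|[|[|[|k]]]]] // _.
  - rewrite /a u0r; have := helper 1 hrho0 k0; rewrite !mulr1 => <-.
    by rewrite cos0 mulr1 in c0r.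
  - by rewrite /a u1r -(helper (cos phi1) hrho0 k1).
  - by rewrite /a u2r -(helper (cos phi2) hrho0 k2).
  - have -> : (fun N => complex.Re (chi 3 (exp5_partial (Wv A L phi1 phi2) N))) =
       (fun N => complex.Re (chi 2 (exp5_partial (Wv A L phi1 phi2) N))).
      by apply/funext => N; rewrite (proj1 (e3 _)).
    by rewrite /a (proj1 (e3 u)) u2r -(helper (cos phi2) hrho0 k2).
  - have -> : (fun N => complex.Re (chi 4 (exp5_partial (Wv A L phi1 phi2) N))) =
       (fun N => complex.Re (chi 1 (exp5_partial (Wv A L phi1 phi2) N))).
      by apply/funext => N; rewrite (proj1 (e4 _)).
    by rewrite /a (proj1 (e4 u)) u1r -(helper (cos phi1) hrho0 k1).
have HB : forall k, (k < 5)%N ->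
    (fun N => complex.Im (chi k (exp5_partial (Wv A L phi1 phi2) N))) @ \oo --> b k.
  case=> [|[|[|[|[|k]]]]] // _.
  - by rewrite /b u0i mul0r; rewrite sin0 mulr0 in c0i.
  - by rewrite /b u1i -(helper (sin phi1) hrho0 k1).
  - by rewrite /b u2i -(helper (sin phi2) hrho0 k2).
  - have -> : (fun N => complex.Im (chi 3 (exp5_partial (Wv A L phi1 phi2) N))) =
       (fun N => - complex.Im (chi 2 (exp5_partial (Wv A L phi1 phi2) N))).
      by apply/funext => N; rewrite (proj2 (e3 _)).
    rewrite /b (proj2 (e3 u)) u2i mulNr -(helper (sin phi2) hrho0 k2).
    exact: cvgN.
  - have -> : (fun N => complex.Im (chi 4 (exp5_partial (Wv A L phi1 phi2) N))) =
       (fun N => - complex.Im (chi 1 (exp5_partial (Wv A L phi1 phi2) N))).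
      by apply/funext => N; rewrite (proj2 (e4 _)).
    rewrite /b (proj2 (e4 u)) u1i mulNr -(helper (sin phi1) hrho0 k1).
    exact: cvgN.
apply/rowP => m.
have Hc := cvg_comp5 (m:=m) HA HB.
rewrite [in RHS]mxE /exp5 mxE.
rewrite (cvg_lim _ Hc) //.
rewrite {1}(comp_formula u m) mulrA [rho5 u * _]mulrC -mulrA; congr (_ * _).
rewrite big_distrr /=; apply: eq_bigr => k _.
by rewrite /a /b; field.
Qed.
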